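(* Let $B\ge1$, $\mathcal{E}>0$, $0<\epsilon\le1$. Run the alternate convex search algorithm described in the context with starting point $\mathbf{i}^{(0)}=(2,\dots,2)$. If $t_b^{(1)}\neq0$ for all $b\in\{0,\dots,B-1\}$, then $\lim_{k\to\infty}(\mathbf{i}^{(k)},\mathbf{t}^{(k)})=(\mathbf{i}^{(0)},\mathbf{t}^{(1)})$.
   Context: Alternate convex search (ACS): given $\mathbf{i}^{(0)}$ with $i^{(0)}_b\ge1+\epsilon$, for $k=0,1,2,\dots$: (1) with $\mathbf{i}^{(k)}$ fixed, let $\mathbf{t}^{(k+1)}$ be an optimal solution of: minimize over $\mathbf{t}\in\mathbb{R}^B$ the quantity $\sum_{b=0}^{B-1}4^b\exp(-2(i_b^{(k)}-1)t_b)$ subject to $\sum_b(i_b^{(k)})^2t_b\le\mathcal{E}$, $t_b\ge0$; (2) with $\mathbf{t}^{(k+1)}$ fixed, let $\mathbf{i}^{(k+1)}$ be an optimal solution of: minimize over $\mathbf{i}\in\mathbb{R}^B$ the quantity $\sum_b4^b\exp(-2(i_b-1)t_b^{(k+1)})$ subject to $\sum_bi_b^2t_b^{(k+1)}\le\mathcal{E}$, $i_b\ge1+\epsilon$. *)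

(* Defs.v *)
From HB Require Import structures.
From mathcomp Require Import all_boot all_order all_algebra.
From mathcomp Require Import all_classical all_reals all_analysis.
Set Implicit Arguments. Unset Strict Implicit. Unset Printing Implicit Defensive.
Import Order.TTheory GRing.Theory Num.Theory.
Import numFieldNormedType.Exports.
Local Open Scope ring_scope.

Section ACS.
Variables (R : realType) (B : nat).

Definition acs_obj (i t : 'I_B -> R) : R :=
  \sum_(b < B) (4 : R) ^+ b * expR (- 2 * (i b - 1) * t b).

Definition acs_energy (i t : 'I_B -> R) : R :=
  \sum_(b < B) (i b) ^+ 2 * t b.

Definition feasible_t (E : R) (i t : 'I_B -> R) : Prop :=
  acs_energy i t <= E /\ forall b : 'I_B, 0 <= t b.

Definition feasible_i (E eps : R) (t i : 'I_B -> R) : Prop :=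
  acs_energy i t <= E /\ forall b : 'I_B, 1 + eps <= i b.

Definition optimal_t (E : R) (i t : 'I_B -> R) : Prop :=
  feasible_t E i t /\
  forall t' : 'I_B -> R, feasible_t E i t' -> acs_obj i t <= acs_obj i t'.

Definition optimal_i (E eps : R) (t i : 'I_B -> R) : Prop :=
  feasible_i E eps t i /\
  forall i' : 'I_B -> R, feasible_i E eps t i' -> acs_obj i t <= acs_obj i' t.

(* (ii, tt) is a run of ACS: tt (k+1) optimal for ii k, ii (k+1) optimal for tt (k+1).
   tt 0 is unused (t^(0) is not defined by the algorithm). *)
Definition acs_run (E eps : R) (ii tt : nat -> 'I_B -> R) : Prop :=
  forall k : nat, optimal_t E (ii k) (tt k.+1) /\ optimal_i E eps (tt k.+1) (ii k.+1).

End ACS.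

(* Main.v *)
Require Import Defs.
From HB Require Import structures.
From mathcomp Require Import all_boot all_order all_algebra.
From mathcomp Require Import all_classical all_reals all_analysis.
From mathcomp Require Import ring lra.
Import Order.TTheory GRing.Theory Num.Theory.
Import numFieldNormedType.Exports.
Local Open Scope classical_set_scope.
Local Open Scope ring_scope.

Lemma exp_mid (R : realType) (u v : R) :
  2 * expR ((u + v) / 2) <= expR u + expR v ?= iff (u == v).
Proof.
set p := expR (u / 2); set q := expR (v / 2).
have hu : expR u = p * p by rewrite /p -expRD; congr expR; field.
have hv : expR v = q * q by rewrite /q -expRD; congr expR; field.
have hm : expR ((u + v) / 2) = p * q by rewrite /p /q -expRD; congr expR; field.
rewrite hu hv hm; split.
  by rewrite -subr_ge0 (_ : _ - _ = (p - q) ^+ 2) ?sqr_ge0 //; ring.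
apply/idP/idP => [/eqP h|/eqP E]; last by rewrite /p /q E; apply/eqP; ring.
have : (p - q) ^+ 2 = 0 by rewrite sqrrB; lra.
move/eqP; rewrite sqrf_eq0 subr_eq0 => /eqP /expR_inj H.
by apply/eqP; have := H; lra.
Qed.

Lemma core (R : realType) (B : nat) (a u v : 'I_B -> R) :
  (forall b, 0 < a b) ->
  \sum_(b < B) a b * expR (u b) + \sum_(b < B) a b * expR (v b) <=
    2 * \sum_(b < B) a b * expR ((u b + v b) / 2) ->
  forall b, u b = v b.
Proof.
move=> ha H b.
pose F b := a b * (expR (u b) + expR (v b) - 2 * expR ((u b + v b) / 2)).
have F0 : forall b, 0 <= F b.
  move=> c; apply: mulr_ge0; first exact: ltW.
  by rewrite subr_ge0 (@exp_mid R (u c) (v c)).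
have S0 : \sum_(c < B) F c = 0.
  apply/eqP; rewrite eq_le sumr_ge0 // andbT.
  have -> : \sum_(c < B) F c = \sum_(c < B) a c * expR (u c) + \sum_(c < B) a c * expR (v c)
       - 2 * \sum_(c < B) a c * expR ((u c + v c) / 2).
    rewrite mulr_sumr -big_split -sumrB /=; apply: eq_bigr => c _; rewrite /F; ring.
  by rewrite subr_le0.
have := psumr_eq0P (P := xpredT) (fun c _ => F0 c) S0 (erefl true) (i := b).
rewrite /F => /eqP; rewrite mulf_eq0 gt_eqF //= subr_eq0 => /eqP h.
apply/eqP; rewrite -(@exp_mid R (u b) (v b)); by rewrite h.
Qed.

Lemma L_opt (R : realType) (B : nat) (E eps : R) (i t : 'I_B -> R) :
  (forall b, i b = 2) -> 0 < eps -> eps <= 1 ->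
  optimal_t E i t -> optimal_i E eps t i.
Proof.
move=> hi he1 he2 [[hE ht] hopt]; split.
  by split => // b; rewrite hi; lra.
move=> i' [hE' hi'].
pose t' b := (i' b - 1) * t b.
have ft' : feasible_t E i t'.
  split; last by move=> b; apply: mulr_ge0 => //; have := hi' b; lra.
  apply: le_trans hE'; apply: ler_sum => b _; rewrite /t' hi.
  have := hi' b; have := ht b; move=> h1 h2.
  rewrite -subr_ge0 (_ : _ - _ = (i' b - 2) ^+ 2 * t b); last by ring.
  by apply: mulr_ge0 => //; apply: sqr_ge0.
apply: le_trans (hopt _ ft') _; rewrite le_eqVlt; apply/orP; left; apply/eqP.
by apply: eq_bigr => b _; rewrite /t' hi; congr (_ * expR _); ring.
Qed.

Lemma L_t (R : realType) (B : nat) (E : R) (i t1 t2 : 'I_B -> R) :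
  (forall b, i b = 2) -> optimal_t E i t1 -> optimal_t E i t2 -> t1 = t2.
Proof.
move=> hi [[hE1 ht1] o1] [[hE2 ht2] o2].
pose tm b := (t1 b + t2 b) / 2.
have fm : feasible_t E i tm.
  split; last by move=> b; rewrite /tm; have := ht1 b; have := ht2 b; lra.
  have -> : acs_energy i tm = (acs_energy i t1 + acs_energy i t2) / 2.
    rewrite /acs_energy mulrDl !mulr_suml -big_split /=; apply: eq_bigr => b _.
    rewrite /tm; ring.
  lra.
have h1 := o1 _ fm. have h2 := o1 _ (conj hE2 ht2). have h3 := o2 _ (conj hE1 ht1).
have := @core R B (fun b => 4 ^+ b) (fun b => -2 * (i b - 1) * t1 b)
   (fun b => -2 * (i b - 1) * t2 b) (fun b => exprn_gt0 _ (ltr0Sn R 3)).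
move=> H; apply/funext => b.
have : -2 * (i b - 1) * t1 b = -2 * (i b - 1) * t2 b; last by rewrite hi; lra.
apply: H.
move: h1 h2 h3; rewrite /acs_obj.
have -> : \sum_(b < B) 4 ^+ b * expR (-2 * (i b - 1) * tm b) =
   \sum_(b < B) 4 ^+ b * expR ((-2 * (i b - 1) * t1 b + -2 * (i b - 1) * t2 b) / 2).
  by apply: eq_bigr => c _; rewrite /tm; congr (_ * expR _); ring.
lra.
Qed.

Lemma L_i (R : realType) (B : nat) (E eps : R) (t i1 i2 : 'I_B -> R) :
  (forall b, 0 <= t b) -> (forall b, t b != 0) ->
  optimal_i E eps t i1 -> optimal_i E eps t i2 -> i1 = i2.
Proof.
move=> ht0 htn [[hE1 ht1] o1] [[hE2 ht2] o2].
pose im b := (i1 b + i2 b) / 2.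
have fm : feasible_i E eps t im.
  split; last by move=> b; rewrite /im; have := ht1 b; have := ht2 b; lra.
  have : acs_energy im t <= (acs_energy i1 t + acs_energy i2 t) / 2.
    rewrite /acs_energy mulrDl !mulr_suml -big_split /=; apply: ler_sum => b _.
    rewrite /im -subr_ge0.
    rewrite (_ : _ - _ = (i1 b - i2 b) ^+ 2 / 4 * t b); last by field.
    apply: mulr_ge0 => //; apply: divr_ge0 => //; exact: sqr_ge0.
  lra.
have h1 := o1 _ fm. have h2 := o1 _ (conj hE2 ht2). have h3 := o2 _ (conj hE1 ht1).
have := @core R B (fun b => 4 ^+ b) (fun b => -2 * (i1 b - 1) * t b)
   (fun b => -2 * (i2 b - 1) * t b) (fun b => exprn_gt0 _ (ltr0Sn R 3)).
move=> H; apply/funext => b.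
have E' : -2 * (i1 b - 1) * t b = -2 * (i2 b - 1) * t b.
  apply: H.
  move: h1 h2 h3; rewrite /acs_obj.
  have -> : \sum_(b < B) 4 ^+ b * expR (-2 * (im b - 1) * t b) =
     \sum_(b < B) 4 ^+ b * expR ((-2 * (i1 b - 1) * t b + -2 * (i2 b - 1) * t b) / 2).
    by apply: eq_bigr => c _; rewrite /im; congr (_ * expR _); field.
  lra.
have : (i1 b - i2 b) * t b == 0.
  have -> : (i1 b - i2 b) * t b = (-2 * (i2 b - 1) * t b - (-2 * (i1 b - 1) * t b)) / 2.
    field.
  done.
  by apply/eqP; move: E'; lra.
by rewrite mulf_eq0 (negbTE (htn b)) orbF subr_eq0 => /eqP.
Qed.

Theorem corollary1 (R : realType) (B : nat) (E eps : R)
    (ii tt : nat -> 'I_B -> R) :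
  (1 <= B)%N -> 0 < E -> 0 < eps -> eps <= 1 ->
  (forall b : 'I_B, ii 0%N b = 2) ->
  acs_run E eps ii tt ->
  (forall b : 'I_B, tt 1%N b != 0) ->
  forall b : 'I_B,
    ((fun k => ii k b) @ \oo --> ii 0%N b) /\ ((fun k => tt k b) @ \oo --> tt 1%N b).
Proof.
move=> _ _ he1 he2 h0 hrun htn b.
case: (hrun 0%N) => o1 _.
have ht0 : forall c, 0 <= tt 1%N c := o1.1.2.
have oi := @L_opt R B E eps _ _ h0 he1 he2 o1.
have key : forall k, ii k = ii 0%N /\ tt k.+1 = tt 1%N.
  elim => [|k [IHi IHt]]; first by [].
  case: (hrun k) => _ oi'.
  rewrite IHt in oi'.
  have Hi : ii k.+1 = ii 0%N := @L_i R B E eps _ _ _ ht0 htn oi' oi.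
  split => //.
  case: (hrun k.+1) => ot2 _.
  rewrite Hi in ot2.
  exact: (@L_t R B E _ _ _ h0 ot2 o1).
split.
  have -> : (fun k => ii k b) = fun _ => ii 0%N b by apply/funext => k; rewrite (key k).1.
  exact: cvg_cst.
apply: cvg_near_cst; exists 1%N => // -[|k] // _ /=.
by rewrite (key k).2.
Qed.
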